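(* Let $X=\bigcup_{\alpha<\gamma}U_\alpha$ be a slowpen chain. If $U_\alpha$ is connected for every $\alpha<\gamma$, then $\mathsf{L}(X,\mathbb{R})$ holds.
   Context: All spaces are Hausdorff and maps continuous. $X$ is a slowpen chain (of length $\gamma$) if $X=\bigcup_{\alpha<\gamma}U_\alpha$ with each $U_\alpha$ open, $U_\alpha\subsetneq U_\beta$ for $\alpha<\beta$, $U_\alpha=\bigcup_{\beta<\alpha}U_\beta$ for limit $\alpha$, and $U_{\alpha+1}=U_\alpha\cup E_\alpha$ with $E_\alpha$ Lindelöf for each $\alpha$. For a non-Lindelöf space $X$ and a space $Y$, $\mathsf{L}(X,Y)$ means: for every continuous $f:X\to Y$ there is a Lindelöf $Z\subset X$ with $f(Z)=f(X)$ (for Lindelöf $X$ regarded as trivially true). *)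

(* Defs.v *)
From HB Require Import structures.
From mathcomp Require Import all_boot all_order all_algebra.
From mathcomp Require Import all_classical all_reals topology normedtype.
Set Implicit Arguments. Unset Strict Implicit. Unset Printing Implicit Defensive.
Import Order.TTheory GRing.Theory Num.Theory.
Local Open Scope classical_set_scope.

Definition lindelof {X : topologicalType} (A : set X) : Prop :=
  forall (J : Type) (F : J -> set X), (forall j, open (F j)) ->
    A `<=` \bigcup_(j in setT) F j ->
    exists D : set J, countable D /\ A `<=` \bigcup_(j in D) F j.

Definition is_succ {d} {I : orderType d} (a b : I) : Prop :=
  (a < b)%O /\ forall c : I, ~ ((a < c)%O /\ (c < b)%O).

(* X = \bigcup_{alpha < gamma} U_alpha is a slowpen chain; the ordinal gamma is
   represented by a well-ordered type I (the set of ordinals alpha < gamma). *)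
Definition slowpen_chain {X : topologicalType} {d} (I : orderType d)
    (U : I -> set X) : Prop :=
  well_founded (fun a b : I => (a < b)%O) /\
  (\bigcup_(a in setT) U a = setT) /\
  (forall a, open (U a)) /\
  (forall a b : I, (a < b)%O -> U a `<` U b) /\
  (* limit stages (every non-successor alpha, incl. the least one) *)
  (forall b : I, (forall a, ~ is_succ a b) ->
     U b = \bigcup_(a in [set a | (a < b)%O]) U a) /\
  (forall a b : I, is_succ a b ->
     exists E : set X, lindelof E /\ U b = U a `|` E).

Definition L_prop (X Y : topologicalType) : Prop :=
  forall f : X -> Y, continuous f ->
    exists Z : set X, lindelof Z /\ f @` Z = f @` setT.

(* Main.v *)
Require Import Defs.
From HB Require Import structures.
From mathcomp Require Import all_boot all_order all_algebra.
From mathcomp Require Import all_classical all_reals topology normedtype.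
Local Open Scope classical_set_scope.

Import numFieldNormedType.Exports.
Import Order.TTheory GRing.Theory Num.Theory.
Local Open Scope ring_scope.
Set Implicit Arguments. Unset Strict Implicit.

Lemma lindelof_bigcup (X : topologicalType) (K : Type) (D : set K) (Z : K -> set X) :
  countable D -> (forall k, D k -> lindelof (Z k)) -> lindelof (\bigcup_(k in D) Z k).
Proof.
move=> cD lZ J F oF cov.
have : forall k, exists Dk : set J, D k -> countable Dk /\ Z k `<=` \bigcup_(j in Dk) F j.
  move=> k; case: (pselect (D k)) => Dk; last by exists set0.
  have [Dk' [c1 c2]] := lZ k Dk J F oF (subset_trans (bigcup_sup Dk) cov).
  by exists Dk'.
move=> /choice [G HG].
exists (\bigcup_(k in D) G k); split.
  by apply: bigcup_countable => // k Dk; case: (HG k Dk).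
move=> x [k Dk Zkx]; have [_ /(_ x Zkx) [j Gj Fj]] := HG k Dk.
by exists j => //; exists k.
Qed.

Lemma lindelof_set0 (X : topologicalType) : lindelof (@set0 X).
Proof. by move=> J F _ _; exists set0; split; [exact: countable0|]. Qed.

Lemma lindelofU (X : topologicalType) (A B : set X) :
  lindelof A -> lindelof B -> lindelof (A `|` B).
Proof.
move=> lA lB.
have -> : A `|` B = \bigcup_(b in [set: bool]) (if b then A else B).
  apply/seteqP; split.
    by move=> x [Ax|Bx]; [exists true|exists false].
  by move=> x [[]] _ ?; [left|right].
apply: lindelof_bigcup; first exact: countableP.
by move=> [] _.
Qed.

Section Key.
Variables (R : realType) (X : topologicalType) (d : Order.disp_t)
  (I : orderType d) (U : I -> set X) (f : X -> R).
Hypothesis mono : forall a b : I, (a < b)%O -> U a `<` U b.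
Hypothesis conn : forall a : I, connected (U a).
Hypothesis cf : continuous f.

Lemma ivt_U a (x y z : R) : (f @` U a) x -> (f @` U a) z -> x <= y <= z ->
  (f @` U a) y.
Proof.
move=> hx hz hy.
have /connected_intervalP iv :=
  connected_continuous_connected (@conn a) (continuous_subspaceT cf).
exact: (iv x z hx hz y hy).
Qed.

Lemma monoU a b : (a <= b)%O -> U a `<=` U b.
Proof.
rewrite le_eqVlt => /orP[/eqP->//|/mono].
by case.
Qed.

Lemma two_point b1 b2 (x y z : R) : (f @` U b1) x -> (f @` U b2) z ->
  x <= y <= z -> exists b, (b = b1 \/ b = b2) /\ (f @` U b) y.
Proof.
move=> hx hz hy.
case/orP: (le_total b1 b2) => h.
  exists b2; split; first by right.
  have hx' : (f @` U b2) x.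
    by case: hx => t Ut <-; by exists t => //; apply: (monoU h).
  exact: (ivt_U hx' hz hy).
exists b1; split; first by left.
have hz' : (f @` U b1) z.
  by case: hz => t Ut <-; by exists t => //; apply: (monoU h).
exact: (ivt_U hx hz' hy).
Qed.

Lemma key (B : set I) :
  (forall b, B b -> exists Z, lindelof Z /\ f @` U b `<=` f @` Z) ->
  exists Z, lindelof Z /\ f @` (\bigcup_(b in B) U b) `<=` f @` Z.
Proof.
move=> HB.
case: (pselect (exists i : I, True)) => [[i0 _]|noI]; last first.
  exists set0; split; first exact: lindelof_set0.
  by move=> y [x [b _ _]]; exfalso; apply: noI; exists b.
have : forall b, exists Z, B b -> lindelof Z /\ f @` U b `<=` f @` Z.
  move=> b; case: (pselect (B b)) => Bb; last by exists set0.
  by have [Z HZ] := HB b Bb; exists Z.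
move=> /choice [Zf HZf].
set J := f @` (\bigcup_(b in B) U b).
have : forall y, exists b, J y -> B b /\ (f @` U b) y.
  move=> y; case: (pselect (J y)) => Jy; last by exists i0.
  by case: Jy => x [b Bb Ubx] <-; exists b => _; split => //; exists x.
move=> /choice [bsel Hb].
have [ymax Hmax] : exists ymax, (exists y, J y /\ forall z, J z -> z <= y) ->
    J ymax /\ forall z, J z -> z <= ymax.
  case: (pselect (exists y, J y /\ forall z, J z -> z <= y)) => h.
    by case: (h) => y hy; exists y.
  by exists 0.
have [ymin Hmin] : exists ymin, (exists y, J y /\ forall z, J z -> y <= z) ->
    J ymin /\ forall z, J z -> ymin <= z.
  case: (pselect (exists y, J y /\ forall z, J z -> y <= z)) => h.
    by case: (h) => y hy; exists y.
  by exists 0.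
pose g (o : option (option rat)) : R :=
  match o with None => ymax | Some None => ymin | Some (Some q) => ratr q end.
exists (\bigcup_(o in [set o | J (g o)]) Zf (bsel (g o))); split.
  apply: lindelof_bigcup; first exact: countableP.
  by move=> o Jo; case: (HZf _ (proj1 (Hb _ Jo))).
have hit : forall o y, J (g o) -> (f @` U (bsel (g o))) y ->
    (f @` (\bigcup_(o in [set o | J (g o)]) Zf (bsel (g o)))) y.
  move=> o y Jo hy; have [Bo _] := Hb _ Jo.
  have [_ /(_ y hy) [x Zx <-]] := HZf _ Bo.
  by exists x => //; exists o.
move=> y Jy.
case: (pselect (forall z, J z -> z <= y)) => hmax.
  have [Jm Hm] := Hmax (ex_intro _ y (conj Jy hmax)).
  have ey : y = ymax by apply/eqP; rewrite eq_le hmax // Hm.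
  by apply: (hit None) => //=; rewrite -ey //; case: (Hb _ Jy).
case: (pselect (forall z, J z -> y <= z)) => hmin.
  have [Jm Hm] := Hmin (ex_intro _ y (conj Jy hmin)).
  have ey : y = ymin by apply/eqP; rewrite eq_le hmin // Hm.
  by apply: (hit (Some None)) => //=; rewrite -ey //; case: (Hb _ Jy).
have [z2 [Jz2 yz2]] : exists z2, J z2 /\ y < z2.
  apply: contrapT => h; apply: hmax => z Jz; rewrite leNgt; apply/negP => lt.
  by apply: h; exists z.
have [z1 [Jz1 z1y]] : exists z1, J z1 /\ z1 < y.
  apply: contrapT => h; apply: hmin => z Jz; rewrite leNgt; apply/negP => lt.
  by apply: h; exists z.
have [q1 /andP[] /= q1a q1b] := rat_in_itvoo z1y.
have [q2 /andP[] /= q2a q2b] := rat_in_itvoo yz2.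
rewrite !bnd_simp in q1a q1b q2a q2b.
have Jb : forall t, J t -> B (bsel t) /\ (f @` U (bsel t)) t by exact: Hb.
have Jq1 : J (ratr q1).
  have [b [eb hb]] := two_point (proj2 (Jb _ Jz1)) (proj2 (Jb _ Jy))
      (y := ratr q1) (ltac:(by rewrite ltW // ltW)).
  case: hb => x Ux fx; exists x => //; exists b => //.
  by case: eb => ->; [exact: (proj1 (Jb _ Jz1))|exact: (proj1 (Jb _ Jy))].
have Jq2 : J (ratr q2).
  have [b [eb hb]] := two_point (proj2 (Jb _ Jy)) (proj2 (Jb _ Jz2))
      (y := ratr q2) (ltac:(by rewrite ltW // ltW)).
  case: hb => x Ux fx; exists x => //; exists b => //.
  by case: eb => ->; [exact: (proj1 (Jb _ Jy))|exact: (proj1 (Jb _ Jz2))].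
have [b [eb hb]] := two_point (proj2 (Jb _ Jq1)) (proj2 (Jb _ Jq2))
    (y := y) (ltac:(by rewrite ltW // ltW)).
case: eb => eb; subst b.
  by apply: (hit (Some (Some q1))).
by apply: (hit (Some (Some q2))).
Qed.

End Key.

Unset Implicit Arguments.

Theorem lemma5p4 (R : realType) (X : topologicalType) (d : Order.disp_t)
    (I : orderType d) (U : I -> set X) :
  hausdorff_space X ->
  slowpen_chain U ->
  (forall a : I, connected (U a)) ->
  L_prop X R.
Proof.
move=> _ [wf [cov [op [mono [lim succ]]]]] conn f cf.
have P : forall a, exists Z, lindelof Z /\ f @` U a `<=` f @` Z.
  apply: (well_founded_ind wf) => a IH.
  case: (pselect (exists b, is_succ b a)) => [[b sb]|ns].
    have [E [lE ->]] := succ _ _ sb.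
    have [Zb [lZb sZb]] := IH b (proj1 sb).
    exists (Zb `|` E); split; first exact: lindelofU.
    move=> y [x [Ubx|Ex] <-].
      by have [t Zt <-] := sZb (f x) (ex_intro2 _ _ x Ubx erefl); exists t => //; left.
    by exists x => //; right.
  rewrite (lim a (fun b h => ns (ex_intro _ b h))).
  by apply: (key mono conn cf) => b ba; exact: IH.
have [Z [lZ sZ]] := key mono conn cf (B := setT) (fun b _ => P b).
exists Z; split => //.
apply/seteqP; split; first by move=> y [x _ <-]; exists x.
by rewrite -cov.
Qed.
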